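(* Let $A(q,x)$, $B(q,x)$, $C(q,x)$ be the generating series $\sum_{n\ge0}\sum_{\gamma\in\mathcal{D}_n}q^{\#w(\gamma)}x^n$ for $w=dduu$, $w=dudu$, $w=duuu$ respectively; let $V(q,x)=\sum_{n\ge0}\sum_{\gamma\in\mathcal{D}_n}q^{\#du(\gamma)}x^n$; and let $F(y,q,x)=\sum_{n\ge0}\sum_{\gamma\in\mathcal{D}_n}y^{\#du(\gamma)}q^{\#duu(\gamma)}x^n$. Here $\#w(\gamma)$ is the number of occurrences of the factor $w$ in $\gamma$. Let $SC_3(x)=\sum_{n\ge0}sc_3(\mathcal{D}_n)x^n$, where $sc_3(\mathcal{D}_n)$ is the number of saturated chains of length 3 in $\mathcal{D}_n$. Then $$ SC_3(x)=2\left[\frac{\partial A}{\partial q}\right]_{q=1}+2\left[\frac{\partial B}{\partial q}\right]_{q=1}+2\left[\frac{\partial C}{\partial q}\right]_{q=1}+\left[\frac{\partial^3 V}{\partial q^3}\right]_{q=1}+6\left[\frac{\partial^2 F}{\partial y\,\partial q}-\frac{\partial F}{\partial q}\right]_{y=q=1}. $$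
   Context: A Dyck path of semilength $n$ is a lattice path from $(0,0)$ to $(2n,0)$ with steps $u=(1,1)$ and $d=(1,-1)$ never going below the $x$-axis, identified with a word over $\{u,d\}$. $\mathcal{D}_n$ is the set of Dyck paths of semilength $n$ ordered by containment: $\gamma\le\gamma'$ iff $\gamma$ lies weakly below $\gamma'$. A saturated chain of length $h$ is a sequence $\gamma^{(0)}<\cdots<\gamma^{(h)}$ in which each element covers the previous one. *)

(* Defs.v *)
From mathcomp Require Import all_boot all_order all_algebra.
Set Implicit Arguments. Unset Strict Implicit. Unset Printing Implicit Defensive.
Import Order.TTheory GRing.Theory Num.Theory.
Local Open Scope ring_scope.

(* Dyck words: true = u = (1,1), false = d = (1,-1). *)
Definition u_step := true.
Definition d_step := false.

Definition ht (s : seq bool) (i : nat) : int :=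
  \sum_(j < i) (if nth false s j then 1 else -1).

Definition dyckb (n : nat) (s : (n.*2).-tuple bool) : bool :=
  [forall i : 'I_(n.*2).+1, 0 <= ht s i] && (ht s n.*2 == 0).

Definition Dyck (n : nat) := {s : (n.*2).-tuple bool | dyckb s}.

Definition leD (n : nat) (g g' : Dyck n) : bool :=
  [forall i : 'I_(n.*2).+1, ht (val g) i <= ht (val g') i].
Definition ltD (n : nat) (g g' : Dyck n) : bool := (g != g') && leD g g'.
Definition coversD (n : nat) (g g' : Dyck n) : bool :=
  ltD g g' && ~~ [exists h : Dyck n, ltD g h && ltD h g'].

Definition sc3 (n : nat) : nat :=
  #|[set c : {ffun 'I_4 -> Dyck n} |
      [forall i : 'I_3, coversD (c (widen_ord (leqnSn 3) i)) (c (lift ord0 i))]]|.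

Definition occ (w s : seq bool) : nat :=
  \sum_(i < size s) (take (size w) (drop i s) == w).

(* x^n-coefficient of sum_gamma q^{#w(gamma)} x^n, as a polynomial in q *)
Definition genpoly (w : seq bool) (n : nat) : {poly int} :=
  \sum_(g : Dyck n) 'X^(occ w (val g)).

Definition w_dduu := [:: d_step; d_step; u_step; u_step].
Definition w_dudu := [:: d_step; u_step; d_step; u_step].
Definition w_duuu := [:: d_step; u_step; u_step; u_step].
Definition w_du := [:: d_step; u_step].
Definition w_duu := [:: d_step; u_step; u_step].

Definition Acoef := genpoly w_dduu.
Definition Bcoef := genpoly w_dudu.
Definition Ccoef := genpoly w_duuu.
Definition Vcoef := genpoly w_du.

(* x^n-coefficient of F(y,q,x): polynomial in y whose coefficients are polynomials in q *)
Definition Fcoef (n : nat) : {poly {poly int}} :=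
  \sum_(g : Dyck n) 'X^(occ w_du (val g)) * ('X^(occ w_duu (val g)))%:P.

(* Main.v *)
Require Import Defs.
From mathcomp Require Import all_boot all_order all_algebra.
From mathcomp Require Import zify ring lra.
From Stdlib Require Import FunctionalExtensionality.
Set Implicit Arguments. Unset Strict Implicit. Unset Printing Implicit Defensive.
Import Order.TTheory GRing.Theory Num.Theory.
Local Open Scope ring_scope.


Definition bz (b : bool) : int := if b then 1 else 0.
Definition pf (p : nat -> bool) i := fun j => if j == i then true else if j == i.+1 then false else p j.
Definition vl (p : nat -> bool) k := ~~ p k && p k.+1.
Definition pddu (p : nat -> bool) k := ~~ p k && ~~ p k.+1 && p k.+2.
Definition pduu (p : nat -> bool) k := ~~ p k && p k.+1 && p k.+2.

Lemma e01 n : (n == n.+1) = false. Proof. by apply/eqP; lia. Qed.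
Lemma e02 n : (n == n.+2) = false. Proof. by apply/eqP; lia. Qed.
Lemma e03 n : (n == n.+3) = false. Proof. by apply/eqP; lia. Qed.
Lemma e04 n : (n == n.+4) = false. Proof. by apply/eqP; lia. Qed.
Lemma e10 n : (n.+1 == n) = false. Proof. by apply/eqP; lia. Qed.
Lemma e20 n : (n.+2 == n) = false. Proof. by apply/eqP; lia. Qed.
Lemma e30 n : (n.+3 == n) = false. Proof. by apply/eqP; lia. Qed.
Lemma e40 n : (n.+4 == n) = false. Proof. by apply/eqP; lia. Qed.

Lemma wcases (i k : nat) :
  (i = k.+2) \/ (i = k.+1) \/ (i = k) \/ (k = i.+1) \/ ((k.+2 < i)%N \/ (i.+1 < k)%N).
Proof. lia. Qed.

Ltac falseq := repeat (case: eqP => ?; first by exfalso; lia).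

Ltac loc i hp hp1 :=
  let k := fresh "k" in
  move=> k; case: (wcases i k) => [e|[e|[e|[e|far]]]];
  [ subst i | subst i | subst i | subst k | rewrite /pf; falseq ];
  rewrite ?addn0 ?addn1 ?addn2 /pf ?eqSS ?eqxx ?e01 ?e02 ?e03 ?e04 ?e10 ?e20 ?e30 ?e40 /= ?hp ?hp1 /=;
  repeat match goal with |- context[?p ?x] => 
     match type of p with nat -> bool => case: (p x) end end;
  by [].

Lemma loc_vl p i (hp : p i = false) (hp1 : p i.+1 = true) k :
  bz (vl (pf p i) k) = bz (vl p k) + bz (k + 1 == i)%N * bz (~~ p k)
     - bz (k + 0 == i)%N * 1 + bz (k + 0 == i.+1)%N * bz (p k.+1).
Proof. move: k; rewrite /vl; loc i hp hp1. Qed.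

Lemma loc_ddu p i (hp : p i = false) (hp1 : p i.+1 = true) k :
  bz (pddu (pf p i) k) = bz (pddu p k) + bz (k + 2 == i)%N * bz (~~ p k && ~~ p k.+1)
     - bz (k + 1 == i)%N * bz (~~ p k) + bz (k + 0 == i.+1)%N * bz (~~ p k.+1 && p k.+2).
Proof. move: k; rewrite /pddu; loc i hp hp1. Qed.

Lemma loc_duu p i (hp : p i = false) (hp1 : p i.+1 = true) k :
  bz (pduu (pf p i) k) = bz (pduu p k) + bz (k + 2 == i)%N * bz (~~ p k && p k.+1)
     - bz (k + 0 == i)%N * bz (p k.+2) + bz (k + 0 == i.+1)%N * bz (p k.+1 && p k.+2).
Proof. move: k; rewrite /pduu; loc i hp hp1. Qed.

Lemma sum_ind c i N (F : nat -> int) : (i < N + c)%N ->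
  \sum_(0 <= k < N) bz (k + c == i)%N * F k = bz (c <= i)%N * F (i - c)%N.
Proof.
move=> h; case: (leqP c i) => hc.
  rewrite (bigD1_seq (i - c)%N) /= ?mem_index_iota ?iota_uniq //; last by lia.
  rewrite subnK // eqxx /bz mul1r big1 ?addr0 // => k hk.
  have -> : (k + c == i)%N = false by apply/eqP; move/eqP: hk; lia.
  by rewrite /bz mul0r.
rewrite big1 /bz; last first.
  move=> k _; have -> : (k + c == i)%N = false by apply/eqP; lia.
  by rewrite /bz mul0r.
by rewrite mul0r.
Qed.

Definition cnt (P : nat -> bool) N : int := \sum_(0 <= k < N) bz (P k).

Lemma L1 p i N (hp : p i = false) (hp1 : p i.+1 = true) (hi : (i.+1 < N)%N) :
  cnt (vl (pf p i)) N = cnt (vl p) N + bz (1 <= i)%N * bz (~~ p (i - 1)%N) - 1 + bz (p i.+2).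
Proof.
rewrite /cnt; under eq_bigr do rewrite loc_vl //.
rewrite !big_split /= sumrN !sum_ind; try lia.
by rewrite subn0 /bz /= !mul1r.
Qed.

Lemma L2 p i N (hp : p i = false) (hp1 : p i.+1 = true) (hi : (i.+1 < N)%N) :
  cnt (pddu (pf p i)) N = cnt (pddu p) N
    + bz (2 <= i)%N * bz (~~ p (i - 2)%N && ~~ p (i - 2)%N.+1)
    - bz (1 <= i)%N * bz (~~ p (i - 1)%N) + bz (~~ p i.+2 && p i.+3).
Proof.
rewrite /cnt; under eq_bigr do rewrite loc_ddu //.
rewrite !big_split /= sumrN !sum_ind; try lia.
by rewrite subn0 /bz /= !mul1r.
Qed.

Lemma L3 p i N (hp : p i = false) (hp1 : p i.+1 = true) (hi : (i.+1 < N)%N) :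
  cnt (pduu (pf p i)) N = cnt (pduu p) N
    + bz (2 <= i)%N * bz (~~ p (i - 2)%N && p (i - 2)%N.+1)
    - bz (p i.+2) + bz (p i.+2 && p i.+3).
Proof.
rewrite /cnt; under eq_bigr do rewrite loc_duu //.
rewrite !big_split /= sumrN !sum_ind; try lia.
by rewrite !subn0 /bz /= !mul1r.
Qed.

Definition pdduu (p : nat -> bool) k := ~~ p k && ~~ p k.+1 && p k.+2 && p k.+3.
Definition pdudu (p : nat -> bool) k := ~~ p k && p k.+1 && ~~ p k.+2 && p k.+3.
Definition pduuu (p : nat -> bool) k := ~~ p k && p k.+1 && p k.+2 && p k.+3.
Definition pdddu (p : nat -> bool) k := ~~ p k && ~~ p k.+1 && ~~ p k.+2 && p k.+3.
Definition bnd (p : nat -> bool) N := forall j, (N <= j)%N -> p j = false.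

Lemma sum_shift c N (F : nat -> int) : (forall k, (N <= k + c)%N -> F k = 0) ->
  \sum_(0 <= i < N) bz (c <= i)%N * F (i - c)%N = \sum_(0 <= k < N) F k.
Proof.
move=> hF; case: (leqP c N) => hc; last first.
  rewrite !big1_seq // => k; rewrite mem_index_iota => hk.
    by apply: hF; lia.
  by rewrite /bz ifF ?mul0r //; apply/negbTE; rewrite -ltnNge; lia.
rewrite (@big_cat_nat _ _ _ c 0 N) //  /= big1_seq ?add0r; last first.
  by move=> k; rewrite mem_index_iota => hk; rewrite /bz ifF ?mul0r //; apply/negbTE; rewrite -ltnNge; lia.
rewrite -{1}(add0n c) big_addn.
rewrite [RHS](@big_cat_nat _ _ _ (N - c) 0 N) ?leq_subr //  /=.
rewrite [X in _ = _ + X]big1_seq ?addr0; last first.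
  by move=> k; rewrite mem_index_iota => hk; apply: hF; lia.
apply: eq_bigr => k _; rewrite addnK /bz ifT ?mul1r //; lia.
Qed.

Lemma Sa p N : bnd p N ->
  \sum_(0 <= i < N) bz (vl p i) * (bz (1 <= i)%N * bz (~~ p (i - 1)%N)) = cnt (pddu p) N.
Proof.
move=> hb; rewrite /cnt -(@sum_shift 1%N N); last first.
  by move=> k hk; rewrite /pddu (hb k.+2) ?andbF //; lia.
apply: eq_bigr => i _; case: i => [|j]; first by rewrite /bz !mul0r mulr0.
have -> : (j.+1 - 1 = j)%N by lia.
by rewrite /bz /vl /pddu; case: (p j); case: (p j.+1); case: (p j.+2).
Qed.

Lemma Sb p N :
  \sum_(0 <= i < N) bz (vl p i) * bz (p i.+2) = cnt (pduu p) N.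
Proof. by apply: eq_bigr => i _; rewrite /bz /vl /pduu; case: (p i); case: (p i.+1); case: (p i.+2). Qed.

Lemma Sab p N : bnd p N ->
  \sum_(0 <= i < N) bz (vl p i) * ((bz (1 <= i)%N * bz (~~ p (i - 1)%N)) * bz (p i.+2)) = cnt (pdduu p) N.
Proof.
move=> hb; rewrite /cnt -(@sum_shift 1%N N); last first.
  by move=> k hk; rewrite /pdduu (hb k.+3) ?andbF //; lia.
apply: eq_bigr => i _; case: i => [|j]; first by rewrite /bz !mul0r mulr0.
have -> : (j.+1 - 1 = j)%N by lia.
by rewrite /bz /vl /pdduu; case: (p j); case: (p j.+1); case: (p j.+2); case: (p j.+3).
Qed.

Lemma Sc p N : bnd p N ->
  \sum_(0 <= i < N) bz (vl p i) * (bz (2 <= i)%N * bz (~~ p (i - 2)%N && ~~ p (i - 2)%N.+1))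
   = cnt (pdddu p) N.
Proof.
move=> hb; rewrite /cnt -(@sum_shift 2%N N); last first.
  by move=> k hk; rewrite /pdddu (hb k.+3) ?andbF //; lia.
apply: eq_bigr => i _; case: i => [|[|j]]; try by rewrite /bz !mul0r mulr0.
have -> : (j.+2 - 2 = j)%N by lia.
by rewrite /bz /vl /pdddu; case: (p j); case: (p j.+1); case: (p j.+2); case: (p j.+3).
Qed.

Lemma Sg p N : bnd p N ->
  \sum_(0 <= i < N) bz (vl p i) * (bz (2 <= i)%N * bz (~~ p (i - 2)%N && p (i - 2)%N.+1))
   = cnt (pdudu p) N.
Proof.
move=> hb; rewrite /cnt -(@sum_shift 2%N N); last first.
  by move=> k hk; rewrite /pdudu (hb k.+3) ?andbF //; lia.
apply: eq_bigr => i _; case: i => [|[|j]]; try by rewrite /bz !mul0r mulr0.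
have -> : (j.+2 - 2 = j)%N by lia.
by rewrite /bz /vl /pdudu; case: (p j); case: (p j.+1); case: (p j.+2); case: (p j.+3).
Qed.

Lemma Se p N :
  \sum_(0 <= i < N) bz (vl p i) * bz (~~ p i.+2 && p i.+3) = cnt (pdudu p) N.
Proof. by apply: eq_bigr => i _; rewrite /bz /vl /pdudu; case: (p i); case: (p i.+1); case: (p i.+2); case: (p i.+3). Qed.

Lemma Sf p N :
  \sum_(0 <= i < N) bz (vl p i) * bz (p i.+2 && p i.+3) = cnt (pduuu p) N.
Proof. by apply: eq_bigr => i _; rewrite /bz /vl /pduuu; case: (p i); case: (p i.+1); case: (p i.+2); case: (p i.+3). Qed.

Lemma bz_mul (b : bool) (X Y : int) : (b -> X = Y) -> bz b * X = bz b * Y.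
Proof. by case: b => [h|_]; [rewrite h | rewrite /bz !mul0r]. Qed.

Lemma vl_bnd p N i : bnd p N -> vl p i -> [/\ p i = false, p i.+1 = true & (i.+1 < N)%N].
Proof.
move=> hb /andP [/negbTE h1 h2]; split => //.
by case: (leqP N i.+1) => // /hb; rewrite h2.
Qed.

Lemma bnd_pf p N i : bnd p N -> (i.+1 < N)%N -> bnd (pf p i) N.
Proof.
move=> hb hi j hj; rewrite /pf.
have -> : (j == i) = false by apply/eqP; lia.
have -> : (j == i.+1) = false by apply/eqP; lia.
exact: hb.
Qed.

Lemma Inner q N : bnd q N ->
  \sum_(0 <= j < N) bz (vl q j) * cnt (vl (pf q j)) N
  = cnt (vl q) N * (cnt (vl q) N - 1) + cnt (pddu q) N + cnt (pduu q) N.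
Proof.
move=> hb.
transitivity (\sum_(0 <= j < N) (bz (vl q j) * (cnt (vl q) N - 1)
   + bz (vl q j) * (bz (1 <= j)%N * bz (~~ q (j - 1)%N)) + bz (vl q j) * bz (q j.+2))).
  apply: eq_bigr => j _; rewrite -!mulrDr; apply: bz_mul => hv.
  case: (vl_bnd hb hv) => h1 h2 h3; rewrite L1 //; ring.
rewrite !big_split /= Sa // Sb -mulr_suml; congr (_ * _ + _ + _).
Qed.

Lemma N3f p N : bnd p N ->
 \sum_(0 <= i < N) bz (vl p i) *
    (\sum_(0 <= j < N) bz (vl (pf p i) j) * cnt (vl (pf (pf p i) j)) N)
 = cnt (vl p) N * (cnt (vl p) N - 1) * (cnt (vl p) N - 2)
   + 3 * (cnt (vl p) N - 1) * (cnt (pddu p) N + cnt (pduu p) N)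
   + 2 * cnt (pdduu p) N + 2 * cnt (pdudu p) N + cnt (pdddu p) N + cnt (pduuu p) N.
Proof.
move=> hb.
set V := cnt (vl p) N; set W := V - 1.
set K := W * (W - 1) + cnt (pddu p) N + cnt (pduu p) N.
transitivity (\sum_(0 <= i < N) (bz (vl p i) * K
   + (2 * W - 1) * (bz (vl p i) * (bz (1 <= i)%N * bz (~~ p (i - 1)%N)))
   + (2 * W - 1) * (bz (vl p i) * bz (p i.+2))
   + 2 * (bz (vl p i) * ((bz (1 <= i)%N * bz (~~ p (i - 1)%N)) * bz (p i.+2)))
   + bz (vl p i) * (bz (2 <= i)%N * bz (~~ p (i - 2)%N && ~~ p (i - 2)%N.+1))
   + bz (vl p i) * bz (~~ p i.+2 && p i.+3)
   + bz (vl p i) * bz (p i.+2 && p i.+3)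
   + bz (vl p i) * (bz (2 <= i)%N * bz (~~ p (i - 2)%N && p (i - 2)%N.+1)))).
  apply: eq_bigr => i _.
  case hv: (vl p i); last by rewrite /bz; ring.
  case: (vl_bnd hb hv) => h1 h2 h3.
  have hb' := bnd_pf hb h3.
  rewrite Inner // L1 // L2 // L3 // -/V /K /W.
  rewrite /bz; case: (1 <= i)%N; case: (p (i - 1)%N); case: (p i.+2) => /=; ring.
rewrite !big_split /= -big_distrl -!big_distrr /= Sa // Sb Sab // Sc // Se Sf Sg //.
rewrite /K /W; ring.
Qed.


Definition pp (s : seq bool) := fun j => nth false s j.
Definition stp (b : bool) : int := if b then 1 else -1.

Lemma ht0 s : ht s 0 = 0.
Proof. by rewrite /ht big_ord0. Qed.

Lemma htS s k : ht s k.+1 = ht s k + stp (nth false s k).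
Proof. by rewrite /ht big_ord_recr. Qed.

Lemma ht_par s k : ht s k = k%:Z - 2 * \sum_(j < k) bz (~~ nth false s j).
Proof.
elim: k => [|k IH]; first by rewrite ht0 big_ord0.
rewrite htS IH big_ord_recr /= /stp /bz; case: (nth false s k) => /=; rewrite intS; ring.
Qed.

Lemma ht_eq_word (s t : seq bool) N : size s = N -> size t = N ->
  (forall k, (k <= N)%N -> ht s k = ht t k) -> s = t.
Proof.
move=> hs ht' hk; apply: (@eq_from_nth _ false); first by rewrite hs ht'.
move=> j; rewrite hs => hj.
have := hk j.+1 hj; rewrite !htS hk ?(ltnW hj) //.
move/addrI; rewrite /stp; case: (nth false s j); case: (nth false t j) => //.
Qed.

Definition fl (s : seq bool) i := mkseq (pf (pp s) i) (size s).

Lemma size_fl s i : size (fl s i) = size s.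
Proof. by rewrite size_mkseq. Qed.

Lemma vl_size s i : vl (pp s) i -> (i.+1 < size s)%N.
Proof.
case/andP=> _; rewrite /pp; case: (ltnP i.+1 (size s)) => // h.
by rewrite nth_default.
Qed.

Lemma pp_fl s i : vl (pp s) i -> pp (fl s i) = pf (pp s) i.
Proof.
move=> hv; have hs := vl_size hv.
apply: functional_extensionality => j; rewrite /pp /fl.
case: (ltnP j (size s)) => hj; first by rewrite nth_mkseq.
rewrite nth_default ?size_mkseq // /pf.
have -> : (j == i) = false by apply/eqP; lia.
have -> : (j == i.+1) = false by apply/eqP; lia.
by rewrite nth_default.
Qed.

Lemma ht_fl s i k : vl (pp s) i -> ht (fl s i) k = ht s k + bz (k == i.+1) * 2.
Proof.
move=> hv; have hs := vl_size hv.
case/andP: hv => /negbTE h1 h2.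
elim: k => [|k IH]; first by rewrite !ht0 /bz add0r mul0r.
rewrite !htS IH.
have e : nth false (fl s i) k = pf (pp s) i k by rewrite -pp_fl //; apply/andP; rewrite h1 h2.
rewrite e /pf /bz /stp.
case: (k =P i) => [->|hki].
  rewrite eqxx e01; rewrite /pp in h1; rewrite h1; ring.
case: (k =P i.+1) => [->|hki1].
  rewrite ?eqSS e10; rewrite /pp in h2; rewrite h2; ring.
rewrite ?eqSS.
have -> : (k == i) = false by apply/eqP.
by rewrite /pp; ring.
Qed.

Lemma par2 s t k : ht s k < ht t k -> ht s k + 2 <= ht t k.
Proof. rewrite !ht_par; lia. Qed.

Lemma par3 s t k : ht s k <= ht t k -> ht t k <= ht s k + 2 ->
  ht t k = ht s k \/ ht t k = ht s k + 2.
Proof. rewrite !ht_par; lia. Qed.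

Lemma tflip_proof m (t : m.-tuple bool) i : size (fl t i) == m.
Proof. by rewrite size_fl size_tuple. Qed.
Definition tflip m (t : m.-tuple bool) i : m.-tuple bool := Tuple (tflip_proof t i).

Section DyckN.
Variable n : nat.
Local Notation N := n.*2.

Definition wd (g : Dyck n) : seq bool := val (val g).
Definition flipD (g : Dyck n) i : Dyck n := insubd g (tflip (val g) i).

Lemma size_wd g : size (wd g) = N.
Proof. by rewrite /wd size_tuple. Qed.

Lemma ht_pos g k : (k <= N)%N -> 0 <= ht (wd g) k.
Proof.
move=> hk; have /andP [/forallP h0 _] := valP g.
exact: (h0 (Ordinal (hk : (k < N.+1)%N))).
Qed.

Lemma ht_end g : ht (wd g) N = 0.
Proof. by have /andP [_ /eqP h] := valP g. Qed.

Lemma leDP g h : reflect (forall k, (k <= N)%N -> ht (wd g) k <= ht (wd h) k) (leD g h).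
Proof.
apply: (iffP forallP) => H k.
  by move=> hk; exact: (H (Ordinal (hk : (k < N.+1)%N))).
by apply: H; rewrite -ltnS.
Qed.

Lemma Dyck_eq g h : (forall k, (k <= N)%N -> ht (wd g) k = ht (wd h) k) -> g = h.
Proof.
move=> H; apply: val_inj; apply: val_inj.
by apply: (@ht_eq_word _ _ N); rewrite ?size_wd.
Qed.

Lemma dyck_fl g i : vl (pp (wd g)) i -> dyckb (tflip (val g) i).
Proof.
move=> hv; have hs := vl_size hv; rewrite size_wd in hs.
apply/andP; split.
  apply/forallP => k; rewrite [ht _ _](ht_fl _ hv).
  have := ht_pos g (ltnSE (ltn_ord k)); rewrite /wd /bz; case: ifP => _; lia.
rewrite [ht _ _](ht_fl _ hv) -/(wd g) ht_end.
by have -> : (N == i.+1) = false by apply/eqP; lia.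
Qed.

Lemma wd_flipD g i : vl (pp (wd g)) i -> wd (flipD g i) = fl (wd g) i.
Proof. by move=> hv; rewrite /wd /flipD insubdK //; exact: dyck_fl. Qed.

Lemma ht_flipD g i k : vl (pp (wd g)) i ->
  ht (wd (flipD g i)) k = ht (wd g) k + bz (k == i.+1) * 2.
Proof. by move=> hv; rewrite wd_flipD // ht_fl. Qed.

Lemma ltD_flip g i : vl (pp (wd g)) i -> ltD g (flipD g i).
Proof.
move=> hv; have hs := vl_size hv; rewrite size_wd in hs.
apply/andP; split.
  apply/eqP => e; have := ht_flipD (i.+1) hv; rewrite -e eqxx /bz; lia.
apply/leDP => k hk; rewrite ht_flipD // /bz; case: ifP => _; lia.
Qed.

Lemma cov_flip g i : vl (pp (wd g)) i -> coversD g (flipD g i).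
Proof.
move=> hv; have hs := vl_size hv; rewrite size_wd in hs.
rewrite /coversD ltD_flip //=; apply/negP => /existsP [h /andP [/andP [ne1 /leDP le1] /andP [ne2 /leDP le2]]].
have sq : forall k, (k <= N)%N -> k != i.+1 -> ht (wd h) k = ht (wd g) k.
  move=> k hk nk; have := le1 k hk; have := le2 k hk; rewrite ht_flipD // /bz (negbTE nk); lia.
have hup : ht (wd h) i.+1 <= ht (wd g) i.+1 + 2.
  by have := le2 _ (ltnW hs); rewrite ht_flipD // eqxx /bz mul1r.
case: (par3 (le1 _ (ltnW hs)) hup) => [e|e].
- move/eqP: ne1; apply; apply: Dyck_eq => k hk.
  by case: (k =P i.+1) => [->|/eqP nk]; [rewrite e | rewrite sq].
- move/eqP: ne2; apply; apply: Dyck_eq => k hk; rewrite ht_flipD //.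
  case: (k =P i.+1) => [->|/eqP nk]; first by rewrite e /bz ?eqxx mul1r.
  by rewrite sq // /bz mul0r addr0.
Qed.

Lemma int_nat (z : int) : 0 <= z -> exists m : nat, z = m%:Z.
Proof. by case: z => [m|m] h; [exists m | ]. Qed.

Lemma stp_le b : stp b <= 1.
Proof. by case: b. Qed.
Lemma stp_ge b : -1 <= stp b.
Proof. by case: b. Qed.

Lemma cov_inv g h : coversD g h -> exists2 i, (i < N)%N & vl (pp (wd g)) i /\ h = flipD g i.
Proof.
case/andP=> /andP [ne /leDP le] noint.
have [k0 [hk0 lt0]] : exists k, (k <= N)%N /\ ht (wd g) k < ht (wd h) k.
  case: (boolP [exists k : 'I_N.+1, ht (wd g) k < ht (wd h) k]).
    by case/existsP => k hk; exists k; split => //; rewrite -ltnS.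
  move=> /existsPn H; move/eqP: ne; case; apply: Dyck_eq => k hk.
  have := H (Ordinal (hk : (k < N.+1)%N)); have := le k hk; rewrite /=; lia.
pose P := fun m : nat => [exists k : 'I_N.+1,
   (ht (wd g) k < ht (wd h) k) && (ht (wd g) k == m%:Z)].
have exP : exists m, P m.
  have [m em] := int_nat (ht_pos g hk0).
  exists m; apply/existsP; exists (Ordinal (hk0 : (k0 < N.+1)%N)) => /=.
  by rewrite lt0 em eqxx.
case: (ex_minnP exP) => m /existsP [k /andP [lt /eqP em]] minm.
have hkN : (k <= N)%N by rewrite -ltnS.
have knz : (k : nat) <> 0%N by move=> e; move: lt; rewrite e !ht0.
have knN : (k : nat) <> N by move=> e; move: lt; rewrite e !ht_end.
have [i ki] : exists i, (k : nat) = i.+1 by case: (k : nat) knz => // i _; exists i.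
have hiN : (i.+1 < N)%N by lia.
have hd : nth false (wd g) i = false.
  apply/negbTE/negP => hi.
  have e1 := htS (wd g) i; have e2 := htS (wd h) i.
  rewrite hi /stp -ki in e1; rewrite -ki in e2.
  have s1 := stp_le (nth false (wd h) i).
  have [m' em'] := int_nat (ht_pos g (ltnW (ltnW hiN))).
  have hP : P m'.
    apply/existsP; exists (Ordinal ((ltnW (ltnW hiN)) : (i < N.+1)%N)) => /=.
    rewrite em' eqxx andbT; lia.
  have := minm _ hP; lia.
have hu : nth false (wd g) i.+1 = true.
  apply/negP => /negP /negbTE hi.
  have e1 := htS (wd g) i.+1; have e2 := htS (wd h) i.+1.
  rewrite hi /stp in e1; rewrite ki in lt em.
  have s1 := stp_ge (nth false (wd h) i.+1).
  have [m' em'] := int_nat (ht_pos g hiN).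
  have hP : P m'.
    apply/existsP; exists (Ordinal (hiN : (i.+2 < N.+1)%N)) => /=.
    rewrite em' eqxx andbT; lia.
  have := minm _ hP; lia.
have hv : vl (pp (wd g)) i by rewrite /vl /pp hd hu.
exists i; first by lia.
split => //.
have lef : leD (flipD g i) h.
  apply/leDP => j hj; rewrite ht_flipD //.
  case: (j =P i.+1) => [ej|/eqP nj].
    rewrite ej /bz ?eqxx mul1r -ki; exact: par2.
  rewrite /bz mul0r addr0; exact: le.
case: (flipD g i =P h) => [//|nfh].
move/negP: noint; case; apply/existsP; exists (flipD g i).
by rewrite ltD_flip //= /ltD lef andbT; apply/eqP.
Qed.

Lemma flip_inj g i j : vl (pp (wd g)) i -> vl (pp (wd g)) j -> flipD g i = flipD g j -> i = j.
Proof.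
move=> hi hj e; have := ht_flipD (i.+1) hi; rewrite e ht_flipD // eqxx /bz.
case: (i.+1 =P j.+1) => [[]//|_]; lia.
Qed.

Lemma cov_ind g h : bz (coversD g h) =
  \sum_(0 <= i < N) bz (vl (pp (wd g)) i) * bz (h == flipD g i).
Proof.
case hc: (coversD g h).
  have [i0 hi0 [hv ->]] := cov_inv hc.
  rewrite (bigD1_seq i0) /= ?mem_index_iota ?iota_uniq // hv eqxx /bz mul1r big1 ?addr0 //.
  move=> j nj; case hj: (vl (pp (wd g)) j); last by rewrite mul0r.
  case: eqP => [/flip_inj e|_]; last by rewrite mulr0.
  by move: nj; rewrite e ?hv ?hj // eqxx.
rewrite big1 // => i _; case hv: (vl (pp (wd g)) i); last by rewrite /bz mul0r.
case: eqP => [e|_]; last by rewrite /bz mulr0.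
by move: hc; rewrite e cov_flip.
Qed.

Lemma sum_pick (F : Dyck n -> int) x : \sum_(h : Dyck n) bz (h == x) * F h = F x.
Proof.
rewrite (bigD1 x) //= eqxx /bz mul1r big1 ?addr0 // => h /negbTE ->; by rewrite mul0r.
Qed.

Lemma cov_sum g (F : Dyck n -> int) :
  \sum_(h : Dyck n) bz (coversD g h) * F h
  = \sum_(0 <= i < N) bz (vl (pp (wd g)) i) * F (flipD g i).
Proof.
under eq_bigr do rewrite cov_ind big_distrl /=.
rewrite exchange_big /=; apply: eq_bigr => i _.
by rewrite -sum_pick big_distrr /=; apply: eq_bigr => h _; rewrite mulrA.
Qed.
End DyckN.


Lemma sum_pair (I J : finType) (F : I * J -> int) :
  \sum_(r : I * J) F r = \sum_(i : I) \sum_(j : J) F (i, j).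
Proof. by rewrite pair_bigA; apply: eq_bigr => [[i j]]. Qed.

Lemma bzF : bz false = 0. Proof. by []. Qed.
Lemma bzT : bz true = 1. Proof. by []. Qed.

Section Chains.
Variable n : nat.
Local Notation T := (Dyck n).

Definition o4 (k : nat) (h : (k < 4)%N) : 'I_4 := Ordinal h.

Definition phi (x : T * T * T * T) : {ffun 'I_4 -> T} :=
  [ffun i : 'I_4 => nth x.1.1.1 [:: x.1.1.1; x.1.1.2; x.1.2; x.2] i].
Definition psi (c : {ffun 'I_4 -> T}) : T * T * T * T :=
  (c (@o4 0 isT), c (@o4 1 isT), c (@o4 2 isT), c (@o4 3 isT)).

Lemma phiK : cancel phi psi.
Proof. by case=> [[[a b] c] d]; rewrite /psi /phi !ffunE. Qed.

Lemma psiK : cancel psi phi.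
Proof.
move=> c; apply/ffunP => i; rewrite /phi /psi ffunE /=.
case: i => [[|[|[|[|k]]]] hk] //=; congr (c _); exact: val_inj.
Qed.

Lemma sc3_sum : (sc3 n)%:Z = \sum_(a : T) \sum_(b : T) bz (coversD a b) *
   (\sum_(c : T) bz (coversD b c) * (\sum_(d : T) bz (coversD c d) * 1)).
Proof.
rewrite /sc3 -sum1_card big_mkcond -natz natr_sum /=.
rewrite (reindex phi) /=; last by exists psi => x _; [exact: phiK | exact: psiK].
transitivity (\sum_(r : T * T * T * T) bz (coversD r.1.1.1 r.1.1.2) *
   bz (coversD r.1.1.2 r.1.2) * bz (coversD r.1.2 r.2)).
  apply: eq_bigr => [[[[a b] c] d]] _ /=; rewrite inE.
  case: (boolP [forall _, _]) => H.
    have h0 := (forallP H) (@Ordinal 3 0 isT).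
    have h1 := (forallP H) (@Ordinal 3 1 isT).
    have h2 := (forallP H) (@Ordinal 3 2 isT).
    rewrite /phi !ffunE /= in h0 h1 h2.
    by rewrite h0 h1 h2 /bz !mul1r.
  move/forallPn: H => [[[|[|[|k]]] hk]] //=; rewrite /phi !ffunE /= => /negbTE ->;
    by rewrite bzF ?(mul0r, mulr0) mulr0n.
rewrite !sum_pair /=.
apply: eq_bigr => a _; apply: eq_bigr => b _; rewrite big_distrr /=.
apply: eq_bigr => c _; rewrite !big_distrr /=.
apply: eq_bigr => d _; by rewrite mulr1 !mulrA.
Qed.

Local Notation N := n.*2.

Lemma L1c (g : T) : \sum_(d : T) bz (coversD g d) * 1 = cnt (vl (pp (wd g))) N.
Proof. by rewrite (cov_sum g (fun _ => 1)); apply: eq_bigr => i _; rewrite mulr1. Qed.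

Lemma L2c (g : T) : \sum_(c : T) bz (coversD g c) * (\sum_(d : T) bz (coversD c d) * 1)
  = \sum_(0 <= j < N) bz (vl (pp (wd g)) j) * cnt (vl (pf (pp (wd g)) j)) N.
Proof.
under eq_bigr do rewrite L1c.
rewrite (cov_sum g (fun c => cnt (vl (pp (wd c))) N)).
apply: eq_bigr => j _; apply: bz_mul => hv.
by rewrite wd_flipD // pp_fl.
Qed.

Lemma L3c (g : T) : \sum_(b : T) bz (coversD g b) *
   (\sum_(c : T) bz (coversD b c) * (\sum_(d : T) bz (coversD c d) * 1))
  = \sum_(0 <= i < N) bz (vl (pp (wd g)) i) *
    (\sum_(0 <= j < N) bz (vl (pf (pp (wd g)) i) j) * cnt (vl (pf (pf (pp (wd g)) i) j)) N).
Proof.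
under eq_bigr do rewrite L2c.
rewrite (cov_sum g (fun b => \sum_(0 <= j < N) bz (vl (pp (wd b)) j) * cnt (vl (pf (pp (wd b)) j)) N)).
apply: eq_bigr => i _; apply: bz_mul => hv.
by rewrite wd_flipD // pp_fl.
Qed.

Lemma bnd_wd (g : T) : bnd (pp (wd g)) N.
Proof. by move=> j hj; rewrite /pp nth_default // size_wd. Qed.

End Chains.


Lemma occ_gen w (P : (nat -> bool) -> nat -> bool) s :
  (forall t, (take (size w) t == w) = P (pp t) 0) ->
  (forall i, P (pp (drop i s)) 0 = P (pp s) i) ->
  (occ w s)%:Z = cnt (P (pp s)) (size s).
Proof.
move=> h1 h2; rewrite /occ /cnt -natz natr_sum big_mkord.
by apply: eq_bigr => i _; rewrite h1 h2 /bz; case: (P _ _).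
Qed.

Ltac tcase := let t := fresh "t" in move=> t;
  case: t => [|a [|b [|c [|d t]]]]; rewrite /vl /pddu /pduu /pdduu /pdudu /pduuu /pdddu /pp /=;
  repeat match goal with |- context[?x : bool] => is_var x; case: x end; by [].

Ltac dcase := let i := fresh "i" in move=> i; rewrite /vl /pddu /pduu /pdduu /pdudu /pduuu /pdddu /pp !nth_drop ?addn0 ?addn1 ?addn2 ?addn3 ?addnS.

Lemma occ_du s : (occ w_du s)%:Z = cnt (vl (pp s)) (size s).
Proof. by apply: occ_gen; [tcase | dcase]. Qed.

Lemma occ_dduu s : (occ w_dduu s)%:Z = cnt (pdduu (pp s)) (size s).
Proof. by apply: occ_gen; [tcase | dcase]. Qed.

Lemma occ_dudu s : (occ w_dudu s)%:Z = cnt (pdudu (pp s)) (size s).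
Proof. by apply: occ_gen; [tcase | dcase]. Qed.

Lemma occ_duuu s : (occ w_duuu s)%:Z = cnt (pduuu (pp s)) (size s).
Proof. by apply: occ_gen; [tcase | dcase]. Qed.

Lemma occ_duu s : (occ w_duu s)%:Z = cnt (pduu (pp s)) (size s).
Proof. by apply: occ_gen; [tcase | dcase]. Qed.

Definition rcp (p : nat -> bool) N := fun j => (j < N)%N && ~~ p (N - j.+1)%N.
Definition rc (s : seq bool) := rev (map negb s).

Lemma pp_rc s : pp (rc s) = rcp (pp s) (size s).
Proof.
apply: functional_extensionality => j; rewrite /pp /rc /rcp.
case: (ltnP j (size s)) => h.
  by rewrite nth_rev size_map // (nth_map false) //; lia.
by rewrite nth_default // size_rev size_map.
Qed.

Lemma rc_vl p N k : vl (rcp p N) k = (k + 2 <= N)%N && vl p (N - 2 - k)%N.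
Proof.
rewrite /rcp /vl /vl; case: (leqP (k + 2) N) => hk.
  have [m ->] : exists m, N = (m + 2 + k)%N by exists (N - 2 - k)%N; lia.
  have -> : (k < m + 2 + k)%N = true by lia.
  have -> : (m + 2 + k - k.+1 = m.+1)%N by lia.
  have -> : (k.+1 < m + 2 + k)%N = true by lia.
  have -> : (m + 2 + k - k.+1.+1 = m)%N by lia.
  have -> : (m + 2 + k - 2 - k = m)%N by lia.
  by case: (p m); rewrite //=; repeat match goal with |- context[p ?x] => case: (p x) end.
have -> : (k.+1 < N)%N = false by lia.
by rewrite ?andbF.
Qed.

Lemma rc_ddu p N k : pddu (rcp p N) k = (k + 3 <= N)%N && pduu p (N - 3 - k)%N.
Proof.
rewrite /rcp /pddu /pduu; case: (leqP (k + 3) N) => hk.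
  have [m ->] : exists m, N = (m + 3 + k)%N by exists (N - 3 - k)%N; lia.
  have -> : (k < m + 3 + k)%N = true by lia.
  have -> : (m + 3 + k - k.+1 = m.+2)%N by lia.
  have -> : (k.+1 < m + 3 + k)%N = true by lia.
  have -> : (m + 3 + k - k.+1.+1 = m.+1)%N by lia.
  have -> : (k.+2 < m + 3 + k)%N = true by lia.
  have -> : (m + 3 + k - k.+2.+1 = m)%N by lia.
  have -> : (m + 3 + k - 3 - k = m)%N by lia.
  by case: (p m); rewrite //=; repeat match goal with |- context[p ?x] => case: (p x) end.
have -> : (k.+2 < N)%N = false by lia.
by rewrite ?andbF.
Qed.

Lemma rc_dddu p N k : pdddu (rcp p N) k = (k + 4 <= N)%N && pduuu p (N - 4 - k)%N.
Proof.
rewrite /rcp /pdddu /pduuu; case: (leqP (k + 4) N) => hk.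
  have [m ->] : exists m, N = (m + 4 + k)%N by exists (N - 4 - k)%N; lia.
  have -> : (k < m + 4 + k)%N = true by lia.
  have -> : (m + 4 + k - k.+1 = m.+3)%N by lia.
  have -> : (k.+1 < m + 4 + k)%N = true by lia.
  have -> : (m + 4 + k - k.+1.+1 = m.+2)%N by lia.
  have -> : (k.+2 < m + 4 + k)%N = true by lia.
  have -> : (m + 4 + k - k.+2.+1 = m.+1)%N by lia.
  have -> : (k.+3 < m + 4 + k)%N = true by lia.
  have -> : (m + 4 + k - k.+3.+1 = m)%N by lia.
  have -> : (m + 4 + k - 4 - k = m)%N by lia.
  by case: (p m); rewrite //=; repeat match goal with |- context[p ?x] => case: (p x) end.
have -> : (k.+3 < N)%N = false by lia.
by rewrite ?andbF.
Qed.

Lemma rev_sum L N (Q : nat -> bool) : (0 < L)%N -> (forall k, (N <= k + L.-1)%N -> Q k = false) ->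
  \sum_(0 <= k < N) bz ((k + L <= N)%N && Q (N - L - k)%N) = \sum_(0 <= k < N) bz (Q k).
Proof.
move=> hL hQ; rewrite big_nat_rev /= -(@sum_shift L.-1 N (fun k => bz (Q k))); last first.
  by move=> k hk; rewrite hQ.
apply: eq_big_nat => k hk; case: (leqP L.-1 k) => h.
  have -> : (0 + N - k.+1 + L <= N)%N = true by lia.
  have -> : (N - L - (0 + N - k.+1) = k - L.-1)%N by lia.
  by rewrite /bz /=; case: (Q _); rewrite ?mul1r.
have -> : (0 + N - k.+1 + L <= N)%N = false by lia.
by rewrite /bz /= mul0r.
Qed.

Lemma cnt_rc_vl p N : bnd p N -> cnt (vl (rcp p N)) N = cnt (vl p) N.
Proof.
move=> hb; rewrite /cnt; under eq_bigr do rewrite rc_vl.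
by apply: rev_sum => // k hk; rewrite /vl (hb k.+1) ?andbF //; lia.
Qed.

Lemma cnt_rc_ddu p N : bnd p N -> cnt (pddu (rcp p N)) N = cnt (pduu p) N.
Proof.
move=> hb; rewrite /cnt; under eq_bigr do rewrite rc_ddu.
by apply: rev_sum => // k hk; rewrite /pduu (hb k.+2) ?andbF //; lia.
Qed.

Lemma cnt_rc_dddu p N : bnd p N -> cnt (pdddu (rcp p N)) N = cnt (pduuu p) N.
Proof.
move=> hb; rewrite /cnt; under eq_bigr do rewrite rc_dddu.
by apply: rev_sum => // k hk; rewrite /pduuu (hb k.+3) ?andbF //; lia.
Qed.

Lemma size_rc s : size (rc s) = size s.
Proof. by rewrite /rc size_rev size_map. Qed.

Lemma rcK s : rc (rc s) = s.
Proof. by rewrite /rc map_rev revK -map_comp (@eq_map _ _ _ id) ?map_id // => b /=; rewrite negbK. Qed.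

Lemma ht_rc s k : (k <= size s)%N -> ht (rc s) k = ht s (size s - k)%N - ht s (size s).
Proof.
elim: k => [|k IH] hk; first by rewrite ht0 subn0 subrr.
rewrite htS IH ?(ltnW hk) //.
have e : nth false (rc s) k = ~~ nth false s (size s - k.+1)%N.
  by have := pp_rc s; move/(congr1 (fun f => f k)); rewrite /pp /rcp hk.
have e2 : (size s - k = (size s - k.+1).+1)%N by lia.
rewrite e e2 htS /stp; case: (nth false s _) => /=; ring.
Qed.

Lemma trc_proof m (t : m.-tuple bool) : size (rc t) == m.
Proof. by rewrite size_rc size_tuple. Qed.
Definition trc m (t : m.-tuple bool) : m.-tuple bool := Tuple (trc_proof t).

Section RevD.
Variable n : nat.
Local Notation N := n.*2.
Local Notation T := (Dyck n).

Lemma dyck_rc (g : T) : dyckb (trc (val g)).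
Proof.
apply/andP; split.
  apply/forallP => k /=.
  have hk : (k <= size (wd g))%N by rewrite size_wd -ltnS.
  rewrite (ht_rc hk) size_wd ht_end subr0; apply: ht_pos; lia.
by rewrite /= (ht_rc (_ : (N <= size (wd g))%N)) ?size_wd // subnn ht0 ht_end subrr.
Qed.

Definition rcD (g : T) : T := insubd g (trc (val g)).

Lemma wd_rcD g : wd (rcD g) = rc (wd g).
Proof. by rewrite /wd /rcD insubdK //; exact: dyck_rc. Qed.

Lemma rcD_inj : injective rcD.
Proof.
move=> g h e; apply: val_inj; apply: val_inj.
by rewrite -[val (val g)]rcK -[val (val h)]rcK -!/(wd _) -!wd_rcD e.
Qed.
End RevD.


Lemma d1X (k : nat) : (('X^k : {poly int})^`()).[1] = k%:Z.
Proof. by rewrite derivXn hornerMn hornerXn expr1n natz. Qed.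

Lemma d3X (k : nat) : (('X^k : {poly int})^`(3)).[1] = k%:Z * (k%:Z - 1) * (k%:Z - 2).
Proof.
rewrite derivnXn hornerMn hornerXn expr1n natz.
case: k => [|[|[|k]]] //=.
rewrite !ffactnS ffactn0 /= muln1 !PoszM !intS; ring.
Qed.

Lemma map_deriv_horner (P : {poly {poly int}}) : (map_poly deriv P).[1] = (P.[1])^`().
Proof.
rewrite (@horner_coef_wide _ (size P)); last first.
  by rewrite map_polyE (leq_trans (size_Poly _)) // size_map.
rewrite (@horner_coef_wide _ (size P) P) //.
rewrite raddf_sum /=; apply: eq_bigr => i _.
by rewrite coef_map_id0 ?deriv0 // expr1n !mulr1.
Qed.

Section Poly.
Variable n : nat.
Local Notation T := (Dyck n).
Local Notation N := n.*2.

Lemma A1 w : (genpoly w n)^`().[1] = \sum_(g : T) (occ w (wd g))%:Z.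
Proof. rewrite /genpoly raddf_sum horner_sum; apply: eq_bigr => g _; exact: d1X. Qed.

Lemma V3 : (Vcoef n)^`(3).[1] = \sum_(g : T)
   (occ w_du (wd g))%:Z * ((occ w_du (wd g))%:Z - 1) * ((occ w_du (wd g))%:Z - 2).
Proof. rewrite /Vcoef /genpoly raddf_sum horner_sum; apply: eq_bigr => g _; exact: d3X. Qed.

Lemma F1 : (Fcoef n).[1] = \sum_(g : T) 'X^(occ w_duu (wd g)).
Proof.
rewrite /Fcoef horner_sum; apply: eq_bigr => g _.
by rewrite hornerM hornerXn expr1n mul1r hornerC.
Qed.

Lemma F2 : ((Fcoef n)^`()).[1] = \sum_(g : T) 'X^(occ w_duu (wd g)) *+ occ w_du (wd g).
Proof.
rewrite /Fcoef raddf_sum horner_sum; apply: eq_bigr => g _.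
rewrite /= derivM derivC mulr0 addr0 derivXn hornerM hornerMn hornerXn expr1n hornerC.
by rewrite mulrnAl mul1r.
Qed.

Lemma F1d : ((Fcoef n).[1])^`().[1] = \sum_(g : T) (occ w_duu (wd g))%:Z.
Proof. by rewrite F1 raddf_sum horner_sum; apply: eq_bigr => g _; exact: d1X. Qed.

Lemma F2d : (((Fcoef n)^`()).[1])^`().[1] =
  \sum_(g : T) (occ w_du (wd g))%:Z * (occ w_duu (wd g))%:Z.
Proof.
rewrite F2 raddf_sum horner_sum; apply: eq_bigr => g _.
by rewrite /= derivMn hornerMn d1X -mulr_natl natz mulrC.
Qed.
End Poly.

Section Final.
Variable n : nat.
Local Notation T := (Dyck n).
Local Notation N := n.*2.

Lemma A1c w P : (forall s, (occ w s)%:Z = cnt (P (pp s)) (size s)) ->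
  (genpoly w n)^`().[1] = \sum_(g : T) cnt (P (pp (wd g))) N.
Proof. by move=> h; rewrite A1; apply: eq_bigr => g _; rewrite h size_wd. Qed.

Lemma V3c : (Vcoef n)^`(3).[1] = \sum_(g : T)
   cnt (vl (pp (wd g))) N * (cnt (vl (pp (wd g))) N - 1) * (cnt (vl (pp (wd g))) N - 2).
Proof. by rewrite V3; apply: eq_bigr => g _; rewrite occ_du size_wd. Qed.

Lemma F1dc : ((Fcoef n).[1])^`().[1] = \sum_(g : T) cnt (pduu (pp (wd g))) N.
Proof. by rewrite F1d; apply: eq_bigr => g _; rewrite occ_duu size_wd. Qed.

Lemma F2dc : (((Fcoef n)^`()).[1])^`().[1] =
  \sum_(g : T) cnt (vl (pp (wd g))) N * cnt (pduu (pp (wd g))) N.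
Proof. by rewrite F2d; apply: eq_bigr => g _; rewrite occ_du occ_duu size_wd. Qed.

Lemma sym1 : \sum_(g : T) (cnt (vl (pp (wd g))) N - 1) * cnt (pddu (pp (wd g))) N
  = \sum_(g : T) (cnt (vl (pp (wd g))) N - 1) * cnt (pduu (pp (wd g))) N.
Proof.
rewrite (reindex_inj (@rcD_inj n)) /=; apply: eq_bigr => g _.
by rewrite wd_rcD pp_rc size_wd (cnt_rc_vl (bnd_wd g)) (cnt_rc_ddu (bnd_wd g)).
Qed.

Lemma sym2 : \sum_(g : T) cnt (pdddu (pp (wd g))) N = \sum_(g : T) cnt (pduuu (pp (wd g))) N.
Proof.
rewrite (reindex_inj (@rcD_inj n)) /=; apply: eq_bigr => g _.
by rewrite wd_rcD pp_rc size_wd (cnt_rc_dddu (bnd_wd g)).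
Qed.
End Final.

Theorem mainTheorem7 (n : nat) :
  (sc3 n)%:Z =
    2 * (Acoef n)^`().[1] + 2 * (Bcoef n)^`().[1] + 2 * (Ccoef n)^`().[1]
    + (Vcoef n)^`(3).[1]
    + 6 * ((map_poly deriv ((Fcoef n)^`())).[1].[1]
           - (map_poly deriv (Fcoef n)).[1].[1]).
Proof.
rewrite /Acoef /Bcoef /Ccoef (A1c _ occ_dduu) (A1c _ occ_dudu) (A1c _ occ_duuu).
rewrite V3c !map_deriv_horner F2dc F1dc sc3_sum.
under eq_bigr => a _ do rewrite L3c (N3f (bnd_wd a)).
set N := n.*2.
pose V (g : Dyck n) := cnt (vl (pp (wd g))) N.
pose D2 (g : Dyck n) := cnt (pddu (pp (wd g))) N.
pose U2 (g : Dyck n) := cnt (pduu (pp (wd g))) N.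
transitivity (\sum_(a : Dyck n) (V a * (V a - 1) * (V a - 2) + 3 * ((V a - 1) * D2 a)
   + 3 * ((V a - 1) * U2 a) + 2 * cnt (pdduu (pp (wd a))) N + 2 * cnt (pdudu (pp (wd a))) N
   + cnt (pdddu (pp (wd a))) N + cnt (pduuu (pp (wd a))) N)).
  by apply: eq_bigr => a _; rewrite /V /D2 /U2; ring.
rewrite !big_split /= -!big_distrr /= /D2 /U2 /V sym1 sym2.
have e : \sum_(g : Dyck n) (cnt (vl (pp (wd g))) N - 1) * cnt (pduu (pp (wd g))) N
  = \sum_(g : Dyck n) cnt (vl (pp (wd g))) N * cnt (pduu (pp (wd g))) N
    - \sum_(g : Dyck n) cnt (pduu (pp (wd g))) N.
  by rewrite -sumrB; apply: eq_bigr => g _; ring.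
rewrite e; ring.
Qed.
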